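(* Let $N\ge 1$. The set of all positive integers $n$ whose Chung–Graham decomposition has coefficient $c_N=0$ (i.e. contains neither $F_{2N}$ nor $2F_{2N}$) is $$B_{2N}=\{1,2,\dots,F_{2N}-1\}\cup\bigcup_{k=N+1}^{\infty}\left\{\,j+F_{2k},\ \ j+(n+2)F_{2k}+\left\lfloor\frac{n+1}{\phi}\right\rfloor F_{2k-1}\ :\ 0\le j\le F_{2N}-1,\ n\ge 0\right\},$$ where $\phi=(1+\sqrt5)/2$.
   Context: Fibonacci numbers: $F_1=F_2=1$, $F_{n+1}=F_n+F_{n-1}$ for $n\ge2$. Chung–Graham decomposition: every positive integer $n$ has a unique representation $n=\sum_{i\ge1}c_iF_{2i}$ with $c_i\in\{0,1,2\}$, only finitely many nonzero, such that whenever $c_i=c_j=2$ with $i<j$ there is $k$ with $i<k<j$ and $c_k=0$ (call this the Chung–Graham condition). $\lfloor\cdot\rfloor$ is the floor function. *)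

(* Defs.v *)
From Stdlib Require Import Reals Arith List ZArith.
Import ListNotations.

Fixpoint fib (n : nat) : nat :=
  match n with
  | 0 => 0
  | S m => match m with
           | 0 => 1
           | S k => fib m + fib k
           end
  end.

(* A finitely supported coefficient sequence (c_1, c_2, ..., c_L) is stored
   as a list c; coef c i = c_i for i >= 1 (and 0 beyond the list). *)
Definition coef (c : list nat) (i : nat) : nat := nth (i - 1) c 0.

Fixpoint cg_val_from (start : nat) (c : list nat) : nat :=
  match c with
  | [] => 0
  | x :: r => x * fib (2 * start) + cg_val_from (S start) r
  end.

Definition cg_val (c : list nat) : nat := cg_val_from 1 c.

Definition is_CG_rep (c : list nat) (n : nat) : Prop :=
  (forall i, 1 <= i -> coef c i <= 2) /\
  (forall i j, 1 <= i -> i < j -> coef c i = 2 -> coef c j = 2 ->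
     exists k, i < k /\ k < j /\ coef c k = 0) /\
  cg_val c = n.

Definition phi : R := ((1 + sqrt 5) / 2)%R.

Definition floor_succ_div_phi (m : nat) : nat :=
  Z.to_nat (Int_part (INR (m + 1) / phi)).

Definition in_B (N n : nat) : Prop :=
  (1 <= n /\ n <= fib (2 * N) - 1) \/
  (exists k j, N + 1 <= k /\ j <= fib (2 * N) - 1 /\
     (n = j + fib (2 * k) \/
      exists m, n = j + (m + 2) * fib (2 * k)
                  + floor_succ_div_phi m * fib (2 * k - 1))).

(* Main.v *)
Require Import Defs.
From Stdlib Require Import Reals Arith List ZArith Lia Lra Psatz Classical.
Import ListNotations.

Fixpoint allowed (l : list nat) : Prop :=
  match l with
  | [] => True
  | d :: r => match d with 0 => True | 2 => False | _ => allowed r end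
  end.

Fixpoint valid (l : list nat) : Prop :=
  match l with
  | [] => True
  | d :: r => d <= 2 /\ valid r /\ (d = 2 -> allowed r)
  end.

Fixpoint BW (l : list nat) : nat * nat :=
  match l with
  | [] => (0, 0)
  | d :: r => (d + snd (BW r) + fst (BW r), 2 * d + 2 * snd (BW r) + fst (BW r))
  end.

Definition Bv l := fst (BW l).
Definition Wv l := snd (BW l).

Lemma Bv_cons d r : Bv (d :: r) = d + Wv r + Bv r.
Proof. reflexivity. Qed.
Lemma Wv_cons d r : Wv (d :: r) = 2 * d + 2 * Wv r + Bv r.
Proof. reflexivity. Qed.

Lemma fibSS n : fib (S (S n)) = fib (S n) + fib n.
Proof. reflexivity. Qed.

Lemma fib_le_S n : fib n <= fib (S n).
Proof. destruct n as [|n]. simpl; lia. rewrite fibSS; lia. Qed.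

Lemma fib_mono n m : n <= m -> fib n <= fib m.
Proof. induction 1. lia. pose proof (fib_le_S m); lia. Qed.

Lemma fib_pos n : 1 <= n -> 1 <= fib n.
Proof. intros H. pose proof (fib_mono 1 n H). simpl in *; lia. Qed.

Lemma shift_val l : forall k,
  cg_val_from (S (S k)) l = fib (2*k+2) * Wv l + fib (2*k+1) * Bv l.
Proof.
  induction l as [|d r IH]; intros k.
  - simpl. unfold Wv, Bv; simpl. lia.
  - change (cg_val_from (S (S k)) (d :: r)) with (d * fib (2 * S (S k)) + cg_val_from (S (S (S k))) r).
    rewrite IH, Wv_cons, Bv_cons.
    replace (2 * S (S k)) with (S (S (S (S (2*k))))) by lia.
    replace (2 * S k + 2) with (S (S (S (S (2*k))))) by lia.
    replace (2 * S k + 1) with (S (S (S (2*k)))) by lia.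
    replace (2 * k + 2) with (S (S (2*k))) by lia.
    replace (2 * k + 1) with (S (2*k)) by lia.
    rewrite !fibSS. ring.
Qed.

Lemma cg_val_B l : cg_val l = Bv l.
Proof.
  destruct l as [|d r]. reflexivity.
  unfold cg_val. change (cg_val_from 1 (d :: r)) with (d * fib 2 + cg_val_from 2 r).
  rewrite (shift_val r 0), Bv_cons. simpl. lia.
Qed.
Open Scope R_scope.

Lemma s5_facts : sqrt 5 * sqrt 5 = 5 /\ 2 < sqrt 5 < 3.
Proof.
  assert (H: sqrt 5 * sqrt 5 = 5) by (apply sqrt_sqrt; lra).
  assert (P: 0 <= sqrt 5) by apply sqrt_pos.
  split; [exact H|]. split; nra.
Qed.

Lemma phi_sq : phi * phi = phi + 1.
Proof. destruct s5_facts as [H _]. unfold phi. nra. Qed.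

Lemma phi_bounds : 3/2 < phi < 17/10.
Proof. destruct s5_facts as [H [H1 H2]]. unfold phi. split; nra. Qed.

Definition xr (l : list nat) : R := INR (Wv l) - phi * INR (Bv l).

Lemma xr_cons d r : xr (d :: r) = (2 - phi) * (INR d + xr r).
Proof.
  unfold xr. rewrite Wv_cons, Bv_cons. rewrite !plus_INR, !mult_INR.
  pose proof phi_sq as H.
  set (b := INR (Bv r)). set (w := INR (Wv r)). set (e := INR d).
  assert (E: (2 - phi) * (e + (w - phi*b)) = 2*e + 2*w - phi*e - phi*w - 2*phi*b + (phi*phi)*b) by ring.
  rewrite E, H. change (INR 2) with (1+1). ring.
Qed.

Lemma xr_prop l : valid l ->
  0 <= xr l < 1 /\ (allowed l -> xr l < phi - 1) /\ (~ allowed l -> phi - 1 <= xr l).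
Proof.
  pose proof phi_sq as Q. pose proof phi_bounds as Pb.
  induction l as [|d r IH]; intros V.
  - unfold xr, Wv, Bv; simpl. rewrite Rmult_0_r. repeat split; try lra; intros H; exfalso; apply H; exact I.
  - destruct V as [Hd [Vr H2]]. specialize (IH Vr).
    destruct IH as [[I1 I2] [I3 I4]]. rewrite xr_cons.
    destruct (classic (allowed r)) as [Ha|Ha];
    [specialize (I3 Ha) | specialize (I4 Ha)];
    destruct d as [|[|[|d]]]; simpl; try lia;
    repeat split;
    try (intros HH; solve [contradiction | exfalso; apply HH; exact I | nra]);
    try nra.
    exfalso; apply Ha; apply H2; reflexivity.
Qed.
Close Scope R_scope.

Lemma INR_lt_nat (a b : nat) : (INR a < INR b + 1)%R -> (a <= b)%nat.
Proof.
  intros H. rewrite <- S_INR in H. apply INR_lt in H. lia.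
Qed.

Lemma W_det u v : valid u -> valid v -> Bv u = Bv v -> Wv u = Wv v.
Proof.
  intros Vu Vv E.
  destruct (xr_prop u Vu) as [[A1 A2] _]. destruct (xr_prop v Vv) as [[B1 B2] _].
  unfold xr in *. rewrite E in A1, A2.
  apply Nat.le_antisymm; apply INR_lt_nat; lra.
Qed.

Lemma B0 l : Bv l = 0 -> forall i, nth i l 0 = 0.
Proof.
  induction l as [|d r IH]; intros H i.
  - destruct i; reflexivity.
  - rewrite Bv_cons in H. destruct i; simpl. lia. apply IH. lia.
Qed.

Lemma uniq v : forall u, valid u -> valid v -> Bv u = Bv v ->
  forall i, nth i u 0 = nth i v 0.
Proof.
  induction v as [|d r IH]; intros u Vu Vv E i.
  - unfold Bv at 2 in E; simpl in E. rewrite (B0 u E). destruct i; reflexivity.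
  - destruct u as [|e s].
    + symmetry in E. unfold Bv at 2 in E; simpl in E. rewrite (B0 _ E). destruct i; reflexivity.
    + pose proof (W_det _ _ Vu Vv E) as EW.
      rewrite !Bv_cons in E. rewrite !Wv_cons in EW.
      destruct Vu as [_ [Vs _]]. destruct Vv as [_ [Vr _]].
      assert (Es : Bv s = Bv r) by lia.
      pose proof (W_det _ _ Vs Vr Es).
      destruct i as [|i]; simpl. lia. apply IH; auto.
Qed.

Lemma nat_ceil (y : R) : (0 <= y)%R -> exists w : nat, (y <= INR w < y + 1)%R.
Proof.
  intros Hy. destruct (archimed y) as [H1 H2].
  assert (Hz : (0 < up y)%Z) by (apply lt_IZR; simpl; lra).
  destruct (Req_dec (IZR (up y) - y) 1) as [Eq|Ne].
  - exists (Z.to_nat (up y - 1)). rewrite INR_IZR_INZ, Z2Nat.id by lia.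
    rewrite minus_IZR. simpl. lra.
  - exists (Z.to_nat (up y)). rewrite INR_IZR_INZ, Z2Nat.id by lia. lra.
Qed.

Lemma existence n : exists l, valid l /\ Bv l = n.
Proof.
  induction n as [n IH] using lt_wf_ind.
  destruct n as [|n'].
  - exists []. split; [exact I | reflexivity].
  - set (n := S n') in *.
    pose proof phi_sq as Q. pose proof phi_bounds as Pb.
    assert (Hn : (1 <= INR n)%R) by (unfold n; rewrite S_INR; pose proof (pos_INR n'); lra).
    destruct (nat_ceil (INR n * phi)) as [W [HW1 HW2]]; [nra|].
    assert (HWn : n < W) by (apply INR_lt; nra).
    assert (HW2n : W <= 2 * n) by (apply INR_lt_nat; rewrite mult_INR; change (INR 2) with (1+1)%R; nra).
    destruct (IH (2 * n - W)) as [r [Vr Br]]; [lia|].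
    destruct (xr_prop r Vr) as [[X1 X2] [X3 X4]].
    unfold xr in X1, X2, X3, X4. rewrite Br in X1, X2, X3, X4.
    rewrite minus_INR, mult_INR in X1, X2, X3, X4 by lia.
    change (INR 2) with (1+1)%R in X1, X2, X3, X4.
    assert (D1 : n + Wv r <= W).
    { apply INR_lt_nat. rewrite plus_INR. nra. }
    assert (D2 : W - n - Wv r <= 2).
    { assert (INR W - INR n - INR (Wv r) < 3)%R by nra.
      apply INR_lt_nat. rewrite !minus_INR by lia. change (INR 2) with (1+1)%R. lra. }
    exists ((W - n - Wv r) :: r). split.
    + split; [exact D2|]. split; [exact Vr|].
      intros E2. destruct (classic (allowed r)) as [Ha|Ha]; [exact Ha|].
      specialize (X4 Ha). exfalso.
      assert (E2' : INR W = (INR n + INR (Wv r) + 2)%R).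
      { replace W with (n + Wv r + 2) by lia. rewrite !plus_INR. simpl. lra. }
      nra.
    + rewrite Bv_cons. lia.
Qed.

Lemma val_app a : forall s b, cg_val_from s (a ++ b) = cg_val_from s a + cg_val_from (s + length a) b.
Proof.
  induction a as [|x a IH]; intros s b; simpl.
  - rewrite Nat.add_0_r. reflexivity.
  - rewrite IH. replace (S s + length a) with (s + S (length a)) by lia. lia.
Qed.

Lemma zeros_val l s : (forall i, nth i l 0 = 0) -> cg_val_from s l = 0.
Proof.
  revert s; induction l as [|x l IH]; intros s H; simpl. reflexivity.
  pose proof (H 0) as H0; simpl in H0. subst. rewrite IH. lia.
  intros i; exact (H (S i)).
Qed.

Lemma nth_repeat0 t i : nth i (repeat 0 t) 0 = 0.
Proof. revert i; induction t; intros [|i]; simpl; auto. Qed.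

Lemma val_zeros_app t l s : cg_val_from s (repeat 0 t ++ l) = cg_val_from (s + t) l.
Proof.
  rewrite val_app, zeros_val, repeat_length. reflexivity. apply nth_repeat0.
Qed.

Lemma coef_ge l : forall s i, 1 <= nth i l 0 -> fib (2 * (s + i)) <= cg_val_from s l.
Proof.
  induction l as [|x l IH]; intros s i H.
  - destruct i; simpl in H; lia.
  - change (cg_val_from s (x :: l)) with (x * fib (2 * s) + cg_val_from (S s) l).
    destruct i as [|i]; cbn [nth] in H.
    + rewrite Nat.add_0_r. nia.
    + specialize (IH (S s) i H). replace (S s + i) with (s + S i) in IH by lia. lia.
Qed.

Lemma val_pos_nz l : forall s, 0 < cg_val_from s l -> exists i, nth i l 0 <> 0.
Proof.
  induction l as [|x l IH]; intros s H; simpl in H. lia.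
  destruct x as [|x]. simpl in H. destruct (IH (S s) H) as [i Hi]. exists (S i). exact Hi.
  exists 0. simpl. lia.
Qed.

Lemma allowed_app a b : allowed (a ++ b) -> allowed a.
Proof.
  induction a as [|x a IH]; simpl; intros H. exact I.
  destruct x as [|[|[|x]]]; auto.
Qed.

Lemma valid_app a b : valid (a ++ b) -> valid a /\ valid b.
Proof.
  induction a as [|x a IH]; simpl; intros H. split; auto; exact I.
  destruct H as [H1 [H2 H3]]. destruct (IH H2). split; auto.
  split; auto. split; auto. intros E. apply (allowed_app a b). auto.
Qed.

Lemma allowed_app0 a b : allowed a -> allowed (a ++ 0 :: b).
Proof.
  induction a as [|x a IH]; simpl; intros H. exact I.
  destruct x as [|[|[|x]]]; auto.
Qed.

Lemma valid_app0 a b : valid a -> valid b -> valid (a ++ 0 :: b).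
Proof.
  induction a as [|x a IH]; simpl; intros Ha Hb.
  - split. lia. split; auto. intros; lia.
  - destruct Ha as [H1 [H2 H3]]. split; auto. split; auto.
    intros E; apply allowed_app0; auto.
Qed.

Lemma valid_zeros t l : valid (repeat 0 t ++ l) <-> valid l.
Proof.
  induction t; simpl. tauto.
  split. intros [_ [H _]]; apply IHt; auto.
  intros H; split; [lia|split; [apply IHt; auto| intros; lia]].
Qed.

Lemma valid_pad l t : valid l -> valid (l ++ repeat 0 t).
Proof.
  destruct t as [|t]. rewrite app_nil_r; auto.
  intros H. simpl. apply valid_app0; auto.
  pose proof (proj2 (valid_zeros t [])) as P. rewrite app_nil_r in P. apply P. exact I.
Qed.

Lemma val_pad l t s : cg_val_from s (l ++ repeat 0 t) = cg_val_from s l.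
Proof. rewrite val_app, (zeros_val (repeat 0 t)). lia. apply nth_repeat0. Qed.

Lemma split_nth l : forall i, i < length l -> l = firstn i l ++ nth i l 0 :: skipn (S i) l.
Proof.
  induction l as [|x l IH]; intros i H; simpl in H. lia.
  destruct i as [|i]; simpl. reflexivity. f_equal. apply IH. lia.
Qed.

Lemma lead_zeros l : (forall i, nth i l 0 = 0) \/
  exists t d v, d <> 0 /\ l = repeat 0 t ++ d :: v.
Proof.
  induction l as [|x l IH].
  - left; intros [|i]; reflexivity.
  - destruct x as [|x].
    + destruct IH as [H|[t [d [v [Hd E]]]]].
      * left; intros [|i]; simpl; auto.
      * right. exists (S t), d, v. split; auto. rewrite E. reflexivity.
    + right. exists 0, (S x), l. split; auto.
Qed.

Lemma bound l : forall s,
  (valid l -> cg_val_from (S s) l + fib (2*s+1) <= fib (2*s+2+2*length l)) /\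
  (valid l -> allowed l -> cg_val_from (S s) l + fib (2*s+2) <= fib (2*s+2+2*length l)).
Proof.
  induction l as [|x l IH]; intros s.
  - change (cg_val_from (S s) []) with 0. change (length (@nil nat)) with 0.
    rewrite Nat.mul_0_r, Nat.add_0_r. split; intros; [|lia].
    replace (2*s+2) with (S (S (2*s))) by lia. rewrite fibSS.
    replace (2*s+1) with (S (2*s)) by lia. lia.
  - destruct (IH (S s)) as [IH1 IH2].
    change (cg_val_from (S s) (x :: l)) with (x * fib (2 * S s) + cg_val_from (S (S s)) l).
    simpl length.
    remember (fib (2 * s + 2 + 2 * S (length l))) as F eqn:HF.
    replace (2 * S s + 2 + 2 * length l) with (2*s+2+2*S (length l)) in IH1, IH2 by lia.
    rewrite <- HF in IH1, IH2.
    replace (2 * S s + 1) with (S (S (S (2*s)))) in IH1 by lia.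
    replace (2 * S s + 2) with (S (S (S (S (2*s))))) in IH2 by lia.
    replace (2 * S s) with (S (S (2*s))).
    2: lia.
    replace (2 * s + 1) with (S (2*s)) by lia.
    replace (2 * s + 2) with (S (S (2*s))) by lia.
    rewrite !fibSS in IH1, IH2.
    pose proof (fib_le_S (2*s)).
    split.
    + intros [Hx [Vl Ha]].
      destruct x as [|[|[|x]]]; try lia.
      * specialize (IH1 Vl). rewrite ?fibSS in *. lia.
      * specialize (IH1 Vl). rewrite ?fibSS in *. lia.
      * specialize (IH2 Vl (Ha eq_refl)). rewrite ?fibSS in *. lia.
    + intros [Hx [Vl Ha]] Al.
      destruct x as [|[|[|x]]]; try lia; simpl in Al.
      * specialize (IH1 Vl). rewrite ?fibSS in *. lia.
      * specialize (IH2 Vl Al). rewrite ?fibSS in *. lia.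
      * contradiction.
Qed.

Lemma allowed_iff l : allowed l <->
  (forall j, nth j l 0 = 2 -> exists k, k < j /\ nth k l 0 = 0).
Proof.
  induction l as [|x l IH].
  - simpl. split; intros; [destruct j; simpl in *; lia | exact I].
  - split.
    + intros H j Hj. destruct j as [|j]; simpl in Hj.
      * subst. simpl in H. contradiction.
      * destruct x as [|x].
        -- exists 0. split; [lia|reflexivity].
        -- assert (allowed l) as Hl by (destruct x as [|[|x]]; simpl in H; auto; contradiction).
           destruct (proj1 IH Hl j Hj) as [k [Hk1 Hk2]]. exists (S k). split; [lia|exact Hk2].
    + intros H. destruct x as [|x]. exact I.
      assert (Hl : allowed l).
      { apply IH. intros j Hj. destruct (H (S j) Hj) as [k [Hk1 Hk2]].
        destruct k as [|k]; simpl in Hk2; [lia|]. exists k; split; [lia|exact Hk2]. }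
      destruct x as [|[|x]]; simpl; auto.
      destruct (H 0 eq_refl) as [k [Hk _]]; lia.
Qed.

Lemma valid_iff l : valid l <->
  (forall i, nth i l 0 <= 2) /\
  (forall i j, i < j -> nth i l 0 = 2 -> nth j l 0 = 2 -> exists k, i < k /\ k < j /\ nth k l 0 = 0).
Proof.
  induction l as [|x l IH].
  - simpl. split; [intros _; split; intros; destruct i; simpl in *; lia| intros; exact I].
  - split.
    + intros [H1 [H2 H3]]. destruct (proj1 IH H2) as [D T]. split.
      * intros [|i]; simpl; auto.
      * intros i j Hij Hi Hj. destruct j as [|j]; [lia|]. simpl in Hj.
        destruct i as [|i]; simpl in Hi.
        -- destruct (proj1 (allowed_iff l) (H3 Hi) j Hj) as [k [Hk1 Hk2]].
           exists (S k). split; [lia|split; [lia|exact Hk2]].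
        -- destruct (T i j ltac:(lia) Hi Hj) as [k [Hk1 [Hk2 Hk3]]].
           exists (S k). split; [lia|split; [lia|exact Hk3]].
    + intros [D T]. split; [exact (D 0)|]. split.
      * apply IH. split. intros i; exact (D (S i)).
        intros i j Hij Hi Hj. destruct (T (S i) (S j) ltac:(lia) Hi Hj) as [k [Hk1 [Hk2 Hk3]]].
        destruct k as [|k]; [lia|]. exists k. split; [lia|split; [lia|exact Hk3]].
      * intros Hx. apply allowed_iff. intros j Hj.
        destruct (T 0 (S j) ltac:(lia) Hx Hj) as [k [Hk1 [Hk2 Hk3]]].
        destruct k as [|k]; [lia|]. exists k. split; [lia|exact Hk3].
Qed.

Lemma coefS c i : coef c (S i) = nth i c 0.
Proof. unfold coef. f_equal. lia. Qed.

Lemma rep_iff c n : is_CG_rep c n <-> valid c /\ Bv c = n.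
Proof.
  rewrite valid_iff, <- cg_val_B. unfold is_CG_rep. split.
  - intros [D [T V]]. split; [split|exact V].
    + intros i. rewrite <- coefS. apply D. lia.
    + intros i j Hij Hi Hj. rewrite <- coefS in Hi, Hj.
      destruct (T (S i) (S j) ltac:(lia) ltac:(lia) Hi Hj) as [k [Hk1 [Hk2 Hk3]]].
      destruct k as [|k]; [lia|]. rewrite coefS in Hk3. exists k. split; [lia|split; [lia|exact Hk3]].
  - intros [[D T] V]. split; [|split; [|exact V]].
    + intros [|i] Hi; [lia|]. rewrite coefS. apply D.
    + intros [|i] [|j] Hi Hij Ci Cj; try lia. rewrite coefS in Ci, Cj.
      destruct (T i j ltac:(lia) Ci Cj) as [k [Hk1 [Hk2 Hk3]]].
      exists (S k). rewrite coefS. split; [lia|split; [lia|exact Hk3]].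
Qed.

Open Scope R_scope.
Lemma floor_spec m : INR (floor_succ_div_phi m) * phi <= INR (m + 1) <
   (INR (floor_succ_div_phi m) + 1) * phi.
Proof.
  pose proof phi_bounds as Pb.
  unfold floor_succ_div_phi.
  set (y := INR (m + 1) / phi).
  assert (Hy0 : 0 <= y) by (unfold y; apply Rmult_le_pos; [apply pos_INR| apply Rlt_le, Rinv_0_lt_compat; lra]).
  assert (Hyp : y * phi = INR (m + 1)) by (unfold y; field; lra).
  destruct (base_Int_part y) as [H1 H2].
  assert (HI : (0 <= Int_part y)%Z).
  { assert (-1 < IZR (Int_part y)) by lra. apply lt_IZR in H. lia. }
  rewrite INR_IZR_INZ, Z2Nat.id by exact HI.
  split; nra.
Qed.

Lemma floor_char m b : INR b * phi <= INR (m + 1) < (INR b + 1) * phi ->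
  floor_succ_div_phi m = b.
Proof.
  intros [H1 H2]. pose proof (floor_spec m) as [G1 G2]. pose proof phi_bounds as Pb.
  set (b' := floor_succ_div_phi m) in *.
  apply Nat.le_antisymm; apply INR_lt_nat; nra.
Qed.
Close Scope R_scope.

Lemma val_top k0 d v : cg_val_from (S (S k0)) (d :: v) =
  (d + Wv v) * fib (2 * S (S k0)) + Bv v * fib (2 * S (S k0) - 1).
Proof.
  change (cg_val_from (S (S k0)) (d :: v)) with (d * fib (2 * S (S k0)) + cg_val_from (S (S (S k0))) v).
  rewrite (shift_val v (S k0)).
  replace (2 * S k0 + 2) with (2 * S (S k0)) by lia.
  replace (2 * S k0 + 1) with (2 * S (S k0) - 1) by lia. ring.
Qed.

Lemma upper_form k0 d v : valid (d :: v) -> d <> 0 ->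
  cg_val_from (S (S k0)) (d :: v) = fib (2 * S (S k0)) \/
  exists m, cg_val_from (S (S k0)) (d :: v) =
    (m + 2) * fib (2 * S (S k0)) + floor_succ_div_phi m * fib (2 * S (S k0) - 1).
Proof.
  intros [Hd [Vv Ha]] Hd0. rewrite val_top.
  pose proof phi_bounds as Pb.
  destruct (xr_prop v Vv) as [[X1 X2] [X3 _]]. unfold xr in X1, X2, X3.
  assert (HB: d = 1 /\ Wv v = 0 \/ 2 <= d + Wv v) by lia.
  destruct HB as [[E1 E2]|HB].
  - left. rewrite E2 in X1. simpl in X1.
    assert (Bv v = 0).
    { destruct (Bv v) as [|b]; auto. rewrite S_INR in X1. pose proof (pos_INR b). exfalso; nra. }
    rewrite H, E1, E2. lia.
  - right. exists (d + Wv v - 2).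
    rewrite (floor_char _ (Bv v)). f_equal. f_equal. lia.
    replace (d + Wv v - 2 + 1) with ((d - 1) + Wv v) by lia.
    rewrite plus_INR.
    destruct d as [|[|[|d]]]; try lia.
    + simpl. nra.
    + specialize (X3 (Ha eq_refl)). simpl. nra.
Qed.

Lemma lower_construct m k0 : exists d v, valid (d :: v) /\ d <> 0 /\
  cg_val_from (S (S k0)) (d :: v) =
    (m + 2) * fib (2 * S (S k0)) + floor_succ_div_phi m * fib (2 * S (S k0) - 1).
Proof.
  destruct (existence (floor_succ_div_phi m)) as [v [Vv Bvv]].
  pose proof (floor_spec m) as [G1 G2]. rewrite <- Bvv in G1, G2.
  pose proof phi_bounds as Pb.
  destruct (xr_prop v Vv) as [[X1 X2] [_ X4]]. unfold xr in X1, X2, X4.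
  rewrite plus_INR in G1, G2. simpl (INR 1) in G1, G2.
  assert (W1 : Wv v <= m + 1).
  { apply INR_lt_nat. rewrite plus_INR. simpl (INR 1). nra. }
  assert (W2 : m + 2 - Wv v <= 2).
  { apply INR_lt_nat. rewrite minus_INR, plus_INR by lia. change (INR 2) with (1+1)%R. nra. }
  exists (m + 2 - Wv v), v. split; [|split].
  - split; [exact W2|]. split; [exact Vv|].
    intros E2. destruct (classic (allowed v)) as [Ha|Ha]; [exact Ha|]. exfalso.
    specialize (X4 Ha). assert (Wv v = m) by lia. subst m. nra.
  - lia.
  - rewrite val_top, Bvv. f_equal. f_equal. lia.
Qed.

Lemma nth_pad c t : forall i, nth i (c ++ repeat 0 t) 0 = nth i c 0.
Proof.
  induction c as [|x c IH]; intros i; simpl.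
  - rewrite nth_repeat0. destruct i; reflexivity.
  - destruct i; simpl; auto.
Qed.

Lemma construct N1 l1 k0 d v : valid l1 -> length l1 <= N1 -> N1 <= k0 -> valid (d :: v) ->
  exists c0, valid c0 /\ Bv c0 = Bv l1 + cg_val_from (S (S k0)) (d :: v) /\ nth N1 c0 0 = 0.
Proof.
  intros V1 L1 Hk Vd.
  set (t := k0 - length l1).
  exists (l1 ++ 0 :: (repeat 0 t ++ d :: v)). split; [|split].
  - apply valid_app0; auto. apply valid_zeros; auto.
  - rewrite <- !cg_val_B. unfold cg_val. rewrite val_app.
    change (cg_val_from (1 + length l1) (0 :: repeat 0 t ++ d :: v))
      with (0 * fib (2 * (1 + length l1)) + cg_val_from (S (1 + length l1)) (repeat 0 t ++ d :: v)).
    rewrite val_zeros_app. replace (S (1 + length l1) + t) with (S (S k0)) by (unfold t; lia). lia.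
  - rewrite app_nth2 by lia.
    destruct (N1 - length l1) as [|p] eqn:Ep. reflexivity.
    simpl. rewrite app_nth1. apply nth_repeat0. rewrite repeat_length. unfold t. lia.
Qed.

Lemma lower_rep N1 j : j < fib (2 * S N1) -> exists l1, valid l1 /\ length l1 <= N1 /\ Bv l1 = j.
Proof.
  intros Hj. destruct (existence j) as [l [Vl Bl]].
  destruct (le_lt_dec (length l) N1) as [Hle|Hlt].
  - exists l. auto.
  - exists (firstn N1 l).
    pose proof (firstn_skipn N1 l) as E.
    assert (L : length (firstn N1 l) = N1) by (rewrite length_firstn; lia).
    rewrite <- E in Vl. destruct (valid_app _ _ Vl) as [V1 _].
    split; [exact V1|split; [lia|]].
    rewrite <- Bl. rewrite <- E at 2. rewrite <- !cg_val_B. unfold cg_val. rewrite val_app, L.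
    destruct (Nat.eq_dec (cg_val_from (1 + N1) (skipn N1 l)) 0) as [Z|Z]; [lia|].
    exfalso. destruct (val_pos_nz (skipn N1 l) (1 + N1) ltac:(lia)) as [i Hi].
    pose proof (coef_ge (skipn N1 l) (1 + N1) i ltac:(lia)).
    rewrite <- Bl, <- E, <- cg_val_B in Hj. unfold cg_val in Hj. rewrite val_app, L in Hj.
    pose proof (fib_mono (2 * S N1) (2 * (1 + N1 + i)) ltac:(lia)). lia.
Qed.

Theorem theorem1p3 (N : nat) (HN : 1 <= N) (n : nat) (Hn : 1 <= n) :
  (forall c : list nat, is_CG_rep c n -> coef c N = 0) <-> in_B N n.
Proof.
  destruct N as [|N1]; [lia|]. clear HN.
  split.
  - intros H. destruct (existence n) as [c [Vc Bc]].
    assert (Hc0 : nth N1 c 0 = 0).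
    { rewrite <- coefS. apply H. apply rep_iff. auto. }
    set (c' := c ++ repeat 0 (S N1)).
    assert (Vc' : valid c') by (apply valid_pad; auto).
    assert (Bc' : cg_val_from 1 c' = n) by (unfold c'; rewrite val_pad, <- Bc, <- cg_val_B; reflexivity).
    assert (Nc' : nth N1 c' 0 = 0) by (unfold c'; rewrite nth_pad; auto).
    assert (Lc' : N1 < length c') by (unfold c'; rewrite length_app, repeat_length; lia).
    pose proof (split_nth c' N1 Lc') as Ec. rewrite Nc' in Ec.
    set (l1 := firstn N1 c') in *. set (l2 := skipn (S N1) c') in *.
    assert (L1 : length l1 = N1) by (unfold l1; rewrite length_firstn; lia).
    rewrite Ec in Vc', Bc'. destruct (valid_app _ _ Vc') as [V1 [_ [V2 _]]].
    rewrite val_app, L1 in Bc'.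
    change (cg_val_from (1 + N1) (0 :: l2)) with (0 * fib (2 * (1 + N1)) + cg_val_from (S (1 + N1)) l2) in Bc'.
    pose proof (proj1 (bound l1 0) V1) as Hb.
    replace (2 * 0 + 2 + 2 * length l1) with (2 * S N1) in Hb by lia.
    change (fib (2 * 0 + 1)) with 1 in Hb.
    change (cg_val_from 1 l1) with (cg_val_from (S 0) l1) in Bc'.
    destruct (lead_zeros l2) as [Z|[t [d [v [Hd E2]]]]].
    + left. rewrite (zeros_val l2) in Bc' by exact Z. lia.
    + right. rewrite E2 in Bc', V2. rewrite val_zeros_app in Bc'. apply valid_zeros in V2.
      replace (S (1 + N1) + t) with (S (S (N1 + t))) in Bc' by lia.
      exists (S (S (N1 + t))), (cg_val_from 1 l1). split; [lia|split; [lia|]].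
      destruct (upper_form (N1 + t) d v V2 Hd) as [U|[m U]].
      * left. lia.
      * right. exists m. lia.
  - intros HB c Hc. apply rep_iff in Hc. destruct Hc as [Vc Bc]. rewrite coefS.
    destruct HB as [[H1 H2]|[k [j [Hk [Hj Hform]]]]].
    + destruct (Nat.eq_dec (nth N1 c 0) 0) as [Z|Z]; [exact Z|exfalso].
      pose proof (coef_ge c 1 N1 ltac:(lia)). rewrite <- cg_val_B in Bc. unfold cg_val in Bc.
      replace (2 * (1 + N1)) with (2 * S N1) in H by lia. lia.
    + destruct (lower_rep N1 j ltac:(pose proof (fib_pos (2 * S N1)); lia)) as [l1 [V1 [L1 B1]]].
      destruct k as [|[|k0]]; [lia|lia|].
      assert (Hex : exists d v, valid (d :: v) /\
        n = j + cg_val_from (S (S k0)) (d :: v)).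
      { destruct Hform as [Hf|[m Hf]].
        - exists 1, []. split. { simpl. split; [lia|split; [exact I|intros; lia]]. }
          rewrite Hf. change (cg_val_from (S (S k0)) [1]) with (1 * fib (2 * S (S k0)) + 0). lia.
        - destruct (lower_construct m k0) as [d [v [Vd [_ Ed]]]].
          exists d, v. split; auto. rewrite Ed, Hf. lia. }
      destruct Hex as [d [v [Vd Ed]]].
      destruct (construct N1 l1 k0 d v V1 L1 ltac:(lia) Vd) as [c0 [V0 [B0' N0]]].
      transitivity (nth N1 c0 0); [apply uniq; auto; lia | exact N0].
Qed.
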